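(* Let $p\ge5$ and consider the white metallic tree $\mathcal W_\lambda$ under the leftmost assignment. Let $\nu$ be a node, $u$ its metallic code, and $w$ the metallic code of $\nu-1$ (empty if $\nu=1$). Then: (i) if $\nu$ is black, its signature is $1$ or $2$, and its $p-3$ sons in increasing order have metallic codes $w\,(h+1)$ for $h=1,\dots,p-4$, then $u\,0$; (ii) if $\nu$ is white with signature $0$, its $p-2$ sons in increasing order have codes $w\,h$ for $h=1,\dots,p-4$, then $u\,0$, then $u\,1$; (iii) if $\nu$ is white with signature $1$, its sons have codes $w\,(h+1)$ for $h=1,\dots,p-4$, then $u\,0$, then $u\,1$; (iv) if $\nu$ is white with signature $a\in\{2,\dots,p-3\}$, its sons have codes $w\,h$ for $h=1,\dots,p-3$, then $u\,0$.
   Context: Fix $p\ge5$. Metallic numbers: $m_{-1}=0$, $m_0=1$, $m_{n+2}=(p-2)m_{n+1}-m_n$. With $d=p-3$, $c=p-4$, the metallic code of a positive integer $n$ is the unique word $a_k\cdots a_0$ over $\{0,\dots,p-3\}$ with $a_k\ne0$, $n=\sum a_im_i$, containing no factor $d\,c^j\,d$ ($j\ge0$); the code of $0$ is empty; the signature of $n$ is the last digit $a_0$; $w\,e$ denotes $w$ followed by the digit $e$. White metallic tree under an assignment $\alpha$, $\mathcal W_\alpha$: nodes are the positive integers, black or white; root $1$ is white; nodes processed in increasing order, node $\nu$ receives $p-2$ sons if white and $p-3$ if black, namely the smallest unused integers in increasing order; the assignment gives the position of the unique black son among the sons, other sons being white. The leftmost assignment $\lambda$ puts the black son at position $1$ (the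 smallest son). *)

(* Defs.v *)
From mathcomp Require Import all_boot.
Set Implicit Arguments. Unset Strict Implicit. Unset Printing Implicit Defensive.

(* Metallic numbers m_0, m_1, ... (m_{-1} = 0 is implicit: m_1 = (p-2) m_0 - m_{-1}). *)
Fixpoint mpair (p n : nat) : nat * nat :=
  match n with
  | 0 => (1, p - 2)
  | n'.+1 => let: (a, b) := mpair p n' in (b, (p - 2) * b - a)
  end.
Definition metallic (p n : nat) : nat := (mpair p n).1.

(* Words are seq nat written most significant digit first: [:: a_k; ...; a_0].
   Hence "w e" (w followed by digit e) is [rcons w e], and the last digit is a_0. *)
Definition mvalue (p : nat) (s : seq nat) : nat :=
  \sum_(i < size s) nth 0 (rev s) i * metallic p i.

Definition metallic_code (p n : nat) (s : seq nat) : Prop :=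
  [/\ all (fun a => a <= p - 3) s,
      s = [::] \/ head 0 s <> 0,
      mvalue p s = n &
      forall j : nat, ~~ infix ((p - 3) :: rcons (nseq j (p - 4)) (p - 3)) s].

Definition signature (s : seq nat) : nat := last 0 s.

(* The white metallic tree under an assignment alpha : nat -> nat, where
   alpha nu (in 1..#sons) is the position of the unique black son of node nu.
   State after processing nodes 1..k : (next unused integer, colours of nodes
   1..next-1), colour true = black. *)
Definition nsons (p : nat) (black : bool) : nat := if black then p - 3 else p - 2.

Fixpoint tstate (p : nat) (alpha : nat -> nat) (k : nat) : nat * seq bool :=
  match k with
  | 0 => (2, [:: false])
  | k'.+1 =>
      let: (next, cols) := tstate p alpha k' in
      let b := nth false cols k' in
      let deg := nsons p b in
      (next + deg, cols ++ [seq (i.+1 == alpha k) | i <- iota 0 deg])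
  end.

Definition is_black (p : nat) (alpha : nat -> nat) (nu : nat) : bool :=
  nth false (tstate p alpha nu).2 nu.-1.

Definition sons (p : nat) (alpha : nat -> nat) (nu : nat) : seq nat :=
  iota (tstate p alpha nu.-1).1 (nsons p (is_black p alpha nu)).

Definition leftmost : nat -> nat := fun _ => 1.

Definition have_codes (p : nat) (S : seq nat) (L : seq (seq nat)) : Prop :=
  size S = size L /\
  forall i, i < size S -> metallic_code p (nth 0 S i) (nth [::] L i).

(* Main.v *)
Require Import Defs.
From mathcomp Require Import all_boot zify.
Set Implicit Arguments. Unset Strict Implicit. Unset Printing Implicit Defensive.


Section Words.
Variable p : nat.
Hypothesis p5 : 5 <= p.

Definition Fj j := (p-3) :: rcons (nseq j (p-4)) (p-3).
Definition nf (s : seq nat) := forall j, ~~ infix (Fj j) s.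
Fixpoint scd (t : seq nat) : bool :=
  if t is a :: t' then (a == p-3) || ((a == p-4) && scd t') else false.

Lemma scd_prefix t : scd t <-> exists j, prefix (rcons (nseq j (p-4)) (p-3)) t.
Proof.
elim: t => [|a t IH] /=.
  by split=> // -[[|j]] /=.
split.
  case/orP=> [/eqP->|/andP[/eqP-> /IH [j Hj]]]; first by exists 0; rewrite /= eqxx prefix0s.
  by exists j.+1; rewrite /= eqxx.
case=> [[|j]] /=; first by case/andP=> /eqP <- _; rewrite eqxx.
case/andP=> /eqP <- H; apply/orP; right; rewrite eqxx /=; apply/IH; by exists j.
Qed.

Lemma nf_nil : nf [::].
Proof. by move=> j; rewrite /Fj. Qed.

Lemma nf_cons a t : nf (a :: t) <-> nf t /\ (a = p-3 -> ~ scd t).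
Proof.
split.
  move=> H; split.
    move=> j; move: (H j); rewrite infix_consl negb_or; by case/andP.
  move=> Ha /scd_prefix [j Hj]; move: (H j); rewrite infix_consl /Fj prefix_cons Ha eqxx Hj.
  by [].
case=> H1 H2 j; rewrite infix_consl negb_or H1 andbT /Fj prefix_cons.
apply/negP=> /andP[/eqP Ha Hp]; apply: H2 => //; apply/scd_prefix; by exists j.
Qed.

Lemma Fj_rev j : rev (Fj j) = Fj j.
Proof. by rewrite /Fj rev_cons rev_rcons rev_nseq. Qed.

Lemma nf_rev s : nf (rev s) <-> nf s.
Proof.
have E : forall j s, infix (Fj j) (rev s) = infix (Fj j) s.
  by move=> j s'; rewrite -{1}(Fj_rev j) infix_rev.
by split=> H j; move: (H j); rewrite E.
Qed.

Definition valid s := all (fun a => a <= p-3) s /\ nf s.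

Lemma valid_nil : valid [::].
Proof. split=> //; exact: nf_nil. Qed.

Lemma valid_cons a t : valid (a :: t) <-> [/\ a <= p-3, valid t & (a = p-3 -> ~ scd t)].
Proof.
rewrite /valid /= nf_cons; split.
  by case=> /andP[-> ->] [H1 H2].
case=> -> [-> H1] H2; split=> //; split=> //.
Qed.

Lemma valid_rev s : valid (rev s) <-> valid s.
Proof. by rewrite /valid all_rev nf_rev. Qed.

End Words.


Section Vals.
Variable p : nat.
Hypothesis p5 : 5 <= p.
Local Notation m := (metallic p).

Lemma mpair_inv n : 1 <= (mpair p n).1 /\ 2 * (mpair p n).1 <= (mpair p n).2.
Proof.
elim: n => [|n IH] /=; first by lia.
case: (mpair p n) IH => a b /= [H1 H2]; nia.
Qed.

Lemma m0 : m 0 = 1. Proof. by []. Qed.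
Lemma m1 : m 1 = p - 2. Proof. by []. Qed.
Lemma mS n : m n.+1 = (mpair p n).2.
Proof. rewrite /metallic /=; by case: (mpair p n). Qed.
Lemma m_pos n : 1 <= m n.
Proof. exact: (mpair_inv n).1. Qed.
Lemma m_2 n : 2 * m n <= m n.+1.
Proof. rewrite mS; exact: (mpair_inv n).2. Qed.
Lemma mSS n : m n.+2 = (p - 2) * m n.+1 - m n.
Proof. rewrite /metallic /=; by case: (mpair p n). Qed.
Lemma m_rec n : m n.+2 + m n = (p - 2) * m n.+1.
Proof.
have := m_2 n; have H : m n.+1 <= (p-2) * m n.+1 by rewrite leq_pmull; lia.
rewrite mSS; lia.
Qed.

Definition prevm n := if n is n'.+1 then m n' else 0.
Lemma m_rec' n : m n.+1 + prevm n = (p - 2) * m n.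
Proof. case: n => [|n] /=; first by rewrite m1 m0; lia. exact: m_rec. Qed.
Lemma prevm_le n : prevm n <= m n.
Proof. case: n => [|n] //=; have := m_2 n; lia. Qed.

Fixpoint V k (t : seq nat) : nat :=
  if t is a :: t' then a * m k + V k.+1 t' else 0.

Lemma V_sum t k : \sum_(i < size t) nth 0 t i * m (k + i) = V k t.
Proof.
elim: t k => [|a t IH] k /=; first by rewrite big_ord0.
rewrite big_ord_recl /= addn0 -IH; congr (_ + _); apply: eq_bigr => i _.
by rewrite /bump /= add1n addnS addSn.
Qed.

Lemma mvalue_V s : mvalue p s = V 0 (rev s).
Proof. by rewrite /mvalue -V_sum size_rev. Qed.

Lemma V_rcons t a k : V k (rcons t a) = V k t + a * m (k + size t).
Proof.
elim: t k => [|b t IH] k /=; first by rewrite !addn0 add0n.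
by rewrite IH addnS addSn addnA.
Qed.

Lemma mvalue_cons a s : mvalue p (a :: s) = a * m (size s) + mvalue p s.
Proof. by rewrite !mvalue_V rev_cons V_rcons size_rev addnC. Qed.

Lemma V_rec t k : V k.+2 t + V k t = (p - 2) * V k.+1 t.
Proof.
elim: t k => [|a t IH] k /=; first by lia.
have := IH k.+1; have := m_rec k; nia.
Qed.

Lemma bounds s : valid p s ->
  mvalue p s < m (size s) /\ (~~ scd p s -> mvalue p s + prevm (size s) < m (size s)).
Proof.
elim: s => [|a s IH] /=; first by rewrite /mvalue big_ord0 m0.
case/valid_cons => Ha Hs Hd.
case: (IH Hs) => B1 B2.
rewrite mvalue_cons /=.
have R := m_rec' (size s). have P := prevm_le (size s). have Mp := m_pos (size s).
split.
  case: (eqVneq a (p-3)) => [Ea|Na].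
    have := B2 (introN idP (Hd Ea)); rewrite Ea; nia.
  have Ha' : a <= p - 4 by lia.
  have : a * m (size s) <= (p-4) * m (size s) by apply: leq_mul.
  nia.
case/norP=> Na Hc.
case: (eqVneq a (p-4)) => [Ea|Na4].
  have {}Hc : ~~ scd p s by move: Hc; rewrite Ea eqxx.
  have := B2 Hc; rewrite Ea; nia.
have Ha' : a <= p - 5 by lia.
have : a * m (size s) <= (p-5) * m (size s) by apply: leq_mul.
nia.
Qed.

Lemma uniq_same_size s t : valid p s -> valid p t -> size s = size t ->
  mvalue p s = mvalue p t -> s = t.
Proof.
elim: s t => [|a s IH] [|b t] //= Vs Vt [Esz].
case/valid_cons: Vs => _ Vs _; case/valid_cons: Vt => _ Vt _.
rewrite !mvalue_cons -Esz => E.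
have B1 := (bounds Vs).1; have B2 := (bounds Vt).1.
rewrite -Esz in B2.
have Mp := m_pos (size s).
have Eab : a = b.
  have := congr1 (fun x => x %/ m (size s)) E => /=.
  by rewrite !divnMDl // !divn_small // !addn0.
subst b; congr (_ :: _); apply: IH => //; lia.
Qed.

Lemma m_mono i j : i <= j -> m i <= m j.
Proof.
move=> /subnK <-; elim: (j - i) => [|k IH] //=.
rewrite addSn; have := m_2 (k + i); lia.
Qed.

Lemma m_smono i j : i < j -> m i < m j.
Proof.
move=> H; have := m_mono H; have := m_2 i; have := m_pos i; lia.
Qed.

Lemma code_uniq n s t : metallic_code p n s -> metallic_code p n t -> s = t.
Proof.
case=> As Hs Es Ns; case=> At Ht Et Nt.
have Vs : valid p s by split.
have Vt : valid p t by split.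
apply: uniq_same_size => //; last by rewrite Es Et.
have lo : forall u, (u = [::] \/ head 0 u <> 0) -> valid p u -> u <> [::] ->
   m (size u).-1 <= mvalue p u.
  move=> [|a u] //= [//|Ha] _ _; rewrite mvalue_cons.
  have : 1 * m (size u) <= a * m (size u) by apply: leq_mul; lia.
  lia.
case: s Hs Vs Es {Ns As} => [|a s'] Hs Vs Es; case: t Ht Vt Et {Nt At} => [|b t'] Ht Vt Et //.
- by move: Et; rewrite mvalue_cons -Es /mvalue big_ord0 => /eqP; rewrite addn_eq0 muln_eq0 => /andP[/orP[/eqP Hb|]];
    [case: Ht => // /=; rewrite Hb | have := m_pos (size t'); case: (m _) => //].
- by move: Es; rewrite mvalue_cons -Et /mvalue big_ord0 => /eqP; rewrite addn_eq0 muln_eq0 => /andP[/orP[/eqP Hb|]];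
    [case: Hs => // /=; rewrite Hb | have := m_pos (size s'); case: (m _) => //].
have L1 := lo _ Hs Vs ltac:(done); have L2 := lo _ Ht Vt ltac:(done).
have U1 := (bounds Vs).1; have U2 := (bounds Vt).1.
rewrite /= in L1 L2 U1 U2.
case: (ltngtP (size s') (size t')) => H; last by rewrite /= H.
  have := m_mono H; lia.
have := m_mono H; lia.
Qed.

End Vals.


Section Pred.
Variable p : nat.
Hypothesis p5 : 5 <= p.
Local Notation m := (metallic p).
Local Notation V := (V p).

Definition codeL n t := [/\ valid p t, (t = [::] \/ last 0 t <> 0) & V 0 t = n].

Lemma code_rev n s : metallic_code p n s <-> codeL n (rev s).
Proof.
split.
  case=> A H E N; split.
  - by apply/valid_rev; split.
  - case: s H {A E N} => [|a s] H; first by left.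
    by right; rewrite rev_cons last_rcons; case: H.
  - by rewrite -mvalue_V.
case=> /valid_rev [A N] H E; split => //.
- case: s H {A E N} => [|a s] H; first by left.
  move: H; rewrite rev_cons last_rcons; case=> [|H']; last by right.
  by case: (rev s).
- by rewrite mvalue_V.
Qed.

Lemma codeL_uniq n t1 t2 : codeL n t1 -> codeL n t2 -> t1 = t2.
Proof.
move=> H1 H2; rewrite -(revK t1) -(revK t2); congr rev.
apply: (@code_uniq p p5 n); apply/code_rev; by rewrite revK.
Qed.

Fixpoint predL (t : seq nat) : seq nat :=
  match t with
  | [::] => [::]
  | a :: t' => if a is a'.+1 then (if (a' == 0) && (t' == [::]) then [::] else a' :: t')
               else (if head 0 t' == 0 then p-4 else p-3) :: predL t'
  end.

Lemma V_cons k a t : V k (a :: t) = a * m k + V k.+1 t. Proof. by []. Qed.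

Definition Delta t := if head 0 t == 0 then p - 3 else p - 2.

Lemma pred_props t : valid p t -> t <> [::] -> last 0 t <> 0 ->
  [/\ valid p (predL t), (predL t = [::] \/ last 0 (predL t) <> 0), V 0 (predL t) + 1 = V 0 t,
      V 1 t = V 1 (predL t) + Delta t
    & head 0 t != 0 -> ~ scd p (predL t)].
Proof.
elim: t => [|a t IH] //= Vt _ L.
case/valid_cons: Vt => Ha Vt Hd.
have m1' : m 1 = p - 2 by [].
case: a Ha Hd L => [|a] Ha Hd L /=.
-
  case: t IH Vt Hd L => [|b t] IH Vt Hd L; first by [].
  have [V' L' E' D' S'] := IH Vt ltac:(done) L.
  set e := (if head 0 (b :: t) == 0 then p - 4 else p - 3).
  have He : e = Delta (b :: t) - 1 by rewrite /e /Delta; case: ifP => _; lia.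
  have He2 : 1 <= e <= p - 3 by rewrite /e; case: ifP => _; lia.
  split.
  + apply/valid_cons; split => //.
    * lia.
    * move=> Ee; apply: S'; move: Ee; rewrite /e; case: ifP => //; lia.
  + right; case: (predL (b :: t)) L' => [|c q] /=; first by lia.
    by case.
  + rewrite !V_cons mul0n add0n m0 muln1 He.
    have : 1 <= Delta (b :: t) by rewrite /Delta; case: ifP => _; lia.
    move: D'; rewrite !V_cons; lia.
  + have -> : Delta (0 :: b :: t) = p - 3 by [].
    rewrite mul0n add0n m1' He.
    have R1 := V_rec p5 (b :: t) 0. have R2 := V_rec p5 (predL (b :: t)) 0.
    move: R1 R2 D' E'; rewrite /Delta.
    case: ifP => _ R1 R2 D1 E1.
      have -> : V 2 (b :: t) = (p - 2) * V 1 (b :: t) - V 0 (b :: t) by lia.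
      have -> : V 2 (predL (b :: t)) = (p - 2) * V 1 (predL (b :: t)) - V 0 (predL (b :: t)) by lia.
      rewrite D1 -E1. nia.
    have -> : V 2 (b :: t) = (p - 2) * V 1 (b :: t) - V 0 (b :: t) by lia.
    have -> : V 2 (predL (b :: t)) = (p - 2) * V 1 (predL (b :: t)) - V 0 (predL (b :: t)) by lia.
    rewrite D1 -E1. nia.
  + by [].
-
  case: ifP => [/andP[/eqP a0 /eqP t0]|Hne].
    subst a t; split => //.
    + by left.
    + by rewrite /Delta /= addn0 m1' mul1n.
  split.
  + apply/valid_cons; split => //; lia.
  + right; case: t Vt Hd L Hne {IH} => [|b t] //= _ _ L.
    by rewrite andbT => /negbT /eqP.
  + by rewrite /= m0 !muln1; lia.
  + rewrite /Delta /= m1'; nia.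
  + move=> _ /= /orP [/eqP E|/andP [/eqP E S]]; first by lia.
    by apply: Hd => //; lia.
Qed.

Lemma predL_code n t : codeL n.+1 t -> codeL n (predL t).
Proof.
case=> Vt L E.
have Hne : t <> [::] by move=> h; subst t.
have Ll : last 0 t <> 0 by case: L.
have [V' L' E' _ _] := pred_props Vt Hne Ll.
by split => //; lia.
Qed.

End Pred.


Section Tree.
Variable p : nat.
Hypothesis p5 : 5 <= p.

Definition nx k := (tstate p leftmost k).1.
Definition cols k := (tstate p leftmost k).2.
Definition blk x := is_black p leftmost x.

Lemma tstateS k : tstate p leftmost k.+1 =
  (nx k + nsons p (nth false (cols k) k),
   cols k ++ [seq (i.+1 == 1) | i <- iota 0 (nsons p (nth false (cols k) k))]).
Proof. by rewrite /= /nx /cols; case: (tstate p leftmost k). Qed.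

Lemma nxS k : nx k.+1 = nx k + nsons p (nth false (cols k) k).
Proof. by rewrite /nx tstateS. Qed.

Lemma colsS k : cols k.+1 = cols k ++ [seq (i.+1 == 1) | i <- iota 0 (nsons p (nth false (cols k) k))].
Proof. by rewrite /cols tstateS. Qed.

Lemma nsons_ge b : 2 <= nsons p b.
Proof. rewrite /nsons; case: b; lia. Qed.

Lemma size_cols k : size (cols k) = (nx k).-1 /\ k.+2 <= nx k.
Proof.
elim: k => [|k [IH1 IH2]]; first by [].
rewrite nxS colsS size_cat size_map size_iota IH1.
have := nsons_ge (nth false (cols k) k); lia.
Qed.

Lemma nx_mono j k : j < k -> nx j < nx k.
Proof.
elim: k => [|k IH] //; rewrite ltnS leq_eqVlt => /orP[/eqP->|H].
  rewrite nxS; have := nsons_ge (nth false (cols k) k); lia.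
have := IH H; rewrite nxS; have := nsons_ge (nth false (cols k) k); lia.
Qed.

Lemma nx_inj j k : nx j = nx k -> j = k.
Proof.
move=> E; case: (ltngtP j k) => // H; have := nx_mono H; lia.
Qed.

Lemma nth_cols k i : i < size (cols k) ->
  (nth false (cols k) i <-> exists j, j < k /\ nx j = i.+1).
Proof.
elim: k i => [|k IH] i.
  rewrite /cols /=; case: i => // _; split=> //; by case=> j [].
move=> Hi; rewrite colsS nth_cat.
have [S1 S2] := size_cols k.
case: ifP => Hlt.
  rewrite IH //; split; case=> j [Hj Ej].
    exists j; split=> //; lia.
  exists j; split=> //; case: (ltngtP j k) => // Hjk; first by lia.
  subst j; lia.
rewrite (nth_map 0); last first.
  move: Hi; rewrite colsS size_cat size_map size_iota; lia.
rewrite nth_iota; last by move: Hi; rewrite colsS size_cat size_map size_iota; lia.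
rewrite add0n; split.
  move=> /eqP [] E; exists k; split=> //; lia.
case=> j [Hj Ej]; apply/eqP; congr S.
case: (ltngtP j k) => Hjk; first (have := nx_mono Hjk; lia); first by lia.
subst j; lia.
Qed.

Lemma blkP x : 1 <= x -> (blk x <-> exists j, nx j = x).
Proof.
move=> Hx; rewrite /blk /is_black -/(cols x).
have [S1 S2] := size_cols x.
rewrite nth_cols; last by lia.
split; case=> j; last first.
  move=> E; exists j; split; last by lia.
  have := (size_cols j).2; lia.
case=> _ E; exists j; lia.
Qed.

Lemma blk_nth k : blk k.+1 = nth false (cols k) k.
Proof.
have [S1 S2] := size_cols k.
apply/idP/idP => H.
  apply/nth_cols; first by lia.
  case/blkP: H => // j E; exists j; split => //.
  have := (size_cols j).2; lia.
apply/blkP => //; case/nth_cols: H; first by lia.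
by move=> j [_ E]; exists j.
Qed.

Lemma nxS' k : nx k.+1 = nx k + nsons p (blk k.+1).
Proof. by rewrite nxS blk_nth. Qed.

Lemma sonsE nu : 1 <= nu -> sons p leftmost nu = iota (nx nu.-1) (nsons p (blk nu)).
Proof. by []. Qed.

Lemma blk1 : blk 1 = false.
Proof. by []. Qed.

End Tree.


Section Main.
Variable p : nat.
Hypothesis p5 : 5 <= p.
Local Notation m := (metallic p).
Local Notation V := (V p).
Local Notation codeL := (codeL p).
Local Notation predL := (predL p).
Local Notation blk := (blk p).
Local Notation nx := (nx p).

Lemma codeL_exist x s y : codeL x s -> y <= x -> exists t, codeL y t.
Proof.
move=> H Hy; have := subnK Hy; move: (x - y) => k Ek; rewrite -Ek in H => {Ek}.
elim: k s H => [|k IH] s H; first by exists s; rewrite add0n in H.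
apply: (IH (predL s)); apply: predL_code => //; by rewrite addSn in H.
Qed.

Lemma codeL0 : codeL 0 [::].
Proof. split => //; by left. Qed.

Lemma codeL0_eq t : codeL 0 t -> t = [::].
Proof. move=> H; exact: (codeL_uniq p5 H codeL0). Qed.

Lemma codeL1 : codeL 1 [:: 1].
Proof.
split => //; last by right.
apply/valid_cons; split => //; lia.
Qed.

Lemma codeL1_eq t : codeL 1 t -> t = [:: 1].
Proof. move=> H; exact: (codeL_uniq p5 H codeL1). Qed.

Lemma V2 t k : 2 * V k t <= V k.+1 t.
Proof.
elim: t k => [|a t IH] k //=; have := IH k.+1; have := m_2 p5 k.
move=> H1 H2; have : a * (2 * m k) <= a * m k.+1 by apply: leq_mul.
lia.
Qed.

Lemma codeL_tail x e t : codeL x (e :: t) -> codeL (V 0 t) t.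
Proof.
case=> /valid_cons [_ Vt _] L _; split => //.
case: t {Vt} L => [|b t] L; [by left | right]; by case: L.
Qed.

Lemma codeL_cons e n t : 1 <= e <= p - 3 -> codeL n t -> (e = p - 3 -> ~ scd p t) ->
  codeL (e + V 1 t) (e :: t).
Proof.
move=> He [Vt L E] Hs; split.
- by apply/valid_cons; split => //; lia.
- right; case: t {Vt E Hs} L => [|b t] /= L; [lia | by case: L].
- by rewrite V_cons m0 muln1.
Qed.



Definition gp n (t : seq nat) : bool := (n == 0) || (~~ blk n && (head 0 t <= 1)).
Definition Rn n := forall t, codeL n t -> nx n = V 1 t + 1 + gp n t.
Definition S2 n := forall t, codeL n t -> blk n -> head 0 t = 1 \/ head 0 t = 2.
Definition Kn n := 1 <= n -> forall u, codeL n u -> gp n.-1 (predL u) = blk n || (head 0 u == 1).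
Definition BC x := forall s, codeL x s ->
  (blk x <-> exists e t, [/\ s = e :: t, 1 <= e & e = 1 + gp (V 0 t) t]).

Definition IH N := forall n, n < N -> [/\ Rn n, S2 n & Kn n].

Lemma NS N j t : IH N -> j.+1 < N -> (exists u, codeL j.+1 u) -> codeL j t -> gp j t -> ~ scd p t.
Proof.
move=> H Hj [u Hu] Ht Hg.
have Et : t = predL u by apply: (codeL_uniq p5 Ht); exact: predL_code.
have [_ S K] := H _ Hj.
have := K ltac:(done) u Hu; rewrite /= -Et Hg => /esym /orP Hb.
have Hh : head 0 u != 0.
  case: Hb => [B|/eqP ->] //; by case: (S _ Hu B) => ->.
case: Hu => Vu Lu Eu.
have Hne : u <> [::] by move=> h; subst u.
have Ll : last 0 u <> 0 by case: Lu.
have [_ _ _ _ P3] := pred_props p5 Vu Hne Ll.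
by rewrite Et; apply: P3.
Qed.

Lemma blk0 : blk 0 = false. Proof. by []. Qed.

Lemma codeL_nz n t : codeL n t -> t <> [::] -> 1 <= n.
Proof.
move=> H Ht; case: n H => // H; by have := codeL0_eq H.
Qed.

Lemma BC_of N x : IH N -> 2 <= x -> x <= N -> BC x.
Proof.
move=> H Hx HxN s Hs; split.
- move/(blkP p5 (ltnW Hx)) => [j Ej].
  have Hj2 : j.+2 <= x by rewrite -Ej; exact: (size_cols p5 j).2.
  have [tj Htj] : exists t, codeL j t by apply: (codeL_exist Hs); lia.
  have [R _ _] := H j ltac:(lia).
  have Ex := R _ Htj.
  set e := 1 + gp j tj.
  have He : codeL x (e :: tj).
    have -> : x = e + V 1 tj by rewrite -Ej Ex /e; lia.
    apply: (codeL_cons _ Htj); first by rewrite /e; case: (gp j tj) => /=; lia.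
    move=> Ee; apply: (NS (N := N) (j := j) H _ _ Htj).
    - lia.
    - by apply: (codeL_exist Hs); lia.
    - by move: Ee; rewrite /e; case: (gp j tj) => //= Ee; lia.
  rewrite (codeL_uniq p5 Hs He); exists e, tj; split => //.
  by case: Htj => _ _ ->.
- case=> e [t [Es He Eg]].
  have Ht : codeL (V 0 t) t by apply: (codeL_tail (x := x) (e := e)); rewrite -Es.
  have Ex : x = e + V 1 t by case: Hs => _ _ <-; rewrite Es V_cons m0 muln1.
  have Hn : (V 0 t).+2 <= x.
    case: (posnP (V 0 t)) => Hn0.
      rewrite Ex Hn0; move: Eg; rewrite Hn0 /gp /= => ->; lia.
    have := V2 t 0; lia.
  have [R _ _] := H (V 0 t) ltac:(lia).
  apply/(blkP p5); first lia.
  exists (V 0 t); rewrite (R _ Ht) Ex Eg; lia.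
Qed.

Lemma step_S2 N : IH N -> S2 N.
Proof.
move=> H t Ht B.
case: (ltnP N 2) => HN.
  by move: B; case: N {H Ht} HN => [|[|]].
have [Hb _] := BC_of H HN (leqnn N) Ht.
have [e [t' [Et He Eg]]] := Hb B.
rewrite Et /= Eg; case: (gp _ _); [right|left]; done.
Qed.

Lemma step_K N : IH N -> Kn N.
Proof.
move=> H HN u Hu.
have S2N := step_S2 H.
case: (ltnP N 2) => HN2.
  have EN : N = 1 by lia.
  subst N; by rewrite (codeL1_eq Hu).
have BCN := BC_of H HN2 (leqnn N) Hu.
have Hw : codeL N.-1 (predL u) by apply: (predL_code p5); have -> : N.-1.+1 = N by lia.
case: u Hu BCN Hw => [|e t] Hu BCN Hw.
  by case: Hu => _ _ /= E; lia.
have Ht : codeL (V 0 t) t := codeL_tail Hu.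
have EN : N = e + V 1 t by case: Hu => _ _ <-; rewrite V_cons m0 muln1.
case: e Hu BCN Hw EN => [|[|e']] Hu BCN Hw EN.
-
  have tne : t <> [::] by move=> E; subst t; case: Hu => _ [] //.
  have BN : blk N = false.
    apply/negbTE/negP => /BCN [e [t' [Et He _]]]; case: Et => E1 _; lia.
  rewrite BN /=.
  case: t Ht tne Hu BCN Hw EN => [|b t] Ht tne Hu BCN Hw EN //.
  rewrite /gp.
  have -> : (N.-1 == 0) = false by apply/negbTE; lia.
  rewrite /=.
  case: ifP => Hb /=; last by apply/negbTE; rewrite negb_and; apply/orP; right; lia.
  case: (leqP (p - 4) 1) => Hp; last by rewrite andbF.
  rewrite andbT; apply: negbF.
  (* p = 5, head t = 0 *)
  move/eqP: Hb => Hb; subst b.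
  set M := V 0 (0 :: t).
  have tne' : t <> [::] by move=> E; subst t; case: Hu => _ [] //.
  have Ht' : codeL (V 0 t) t := codeL_tail Ht.
  have M1 : 1 <= V 0 t := codeL_nz Ht' tne'.
  have EM : M = V 1 t by rewrite /M V_cons mul0n.
  have M2 : 2 <= M by have := V2 t 0; lia.
  have MN : M < N by have := V2 (0 :: t) 0; rewrite -/M; lia.
  have [_ S2M KM] := H M MN.
  have BM : blk M = false.
    apply/negbTE/negP => B; case: (S2M _ Ht B) => //.
  have KM' := KM ltac:(lia) _ Ht; rewrite BM /= in KM'.
  have BCN1 := BC_of H (_ : 2 <= N.-1) (leq_pred N) Hw.
  apply/BCN1; first by have := V2 (0 :: t) 0; rewrite -/M; lia.
  exists (p - 4), (predL (0 :: t)); split => //; first by lia.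
  have Hpc := predL_code p5 (n := M.-1) (t := 0 :: t); rewrite prednK in Hpc; last by lia.
  case: (Hpc Ht) => _ _ ->; rewrite KM'; lia.
-
  have tne : t <> [::] by move=> E; subst t; move: EN; rewrite /=; lia.
  have -> : predL (1 :: t) = 0 :: t by rewrite /=; case: t {Ht Hu BCN Hw EN} tne.
  rewrite orbT /gp; apply/orP; right; rewrite /= andbT.
  have [_ S2M _] := H N.-1 ltac:(lia).
  apply/negP => B.
  have Hw' : codeL N.-1 (0 :: t) by move: Hw; rewrite /=; case: t {Ht Hu BCN EN} tne.
  by case: (S2M _ Hw' B).
-
  have -> : predL (e'.+2 :: t) = e'.+1 :: t by [].
  rewrite orbF /gp.
  have -> : (N.-1 == 0) = false by apply/negbTE; lia.
  rewrite /=.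
  case: e' Hu BCN Hw EN => [|e'] Hu BCN Hw EN; last first.
    rewrite andbF; apply/esym/negbTE/negP => /BCN [e [t' [Et He Eg]]].
    case: Et Eg => <- <-; case: (gp _ _) => /=; lia.
  rewrite andbT.
  case: (eqVneq t [::]) => [Et|/eqP tne].
    subst t.
    have -> : N.-1 = 1 by move: EN; rewrite /=; lia.
    rewrite blk1 /=; apply/esym/BCN; exists 2, [::]; split => //.
  have N2 : 2 <= N.-1 by have := codeL_nz Ht tne; have := V2 t 0; lia.
  have BCN1 := BC_of H N2 (leq_pred N) Hw.
  have B1 : blk N.-1 = ~~ gp (V 0 t) t.
    apply/idP/idP.
      move=> /BCN1.
      by case=> e [t' [[<- <-] _ Eg]]; move: Eg; case: (gp _ _).
    move=> G; apply/BCN1.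
    by exists 1, t; split => //; move: G; case: (gp _ _).
  rewrite B1 negbK; apply/idP/idP.
    move=> G; apply/BCN; exists 2, t; split => //; by rewrite G.
  by move=> /BCN [e [t' [[<- <-] _ Eg]]]; move: Eg; case: (gp _ _).
Qed.

Lemma step_R N : IH N -> Rn N.
Proof.
move=> H t Ht.
case: N H Ht => [|N] H Ht.
  by rewrite (codeL0_eq Ht).
have KN := step_K H (ltn0Sn N) Ht.
have S2N := step_S2 H.
have Hw : codeL N (predL t) := predL_code p5 Ht.
have [RN _ _] := H N (ltnSn N).
rewrite nxS'. have ER := RN _ Hw. rewrite ER.
rewrite /= in KN; rewrite KN.
have Hne : t <> [::] by move=> E; subst t; case: Ht => _ _ /=.
have Ll : last 0 t <> 0 by case: Ht => _ [] // E; subst t.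
have [_ _ _ D _] := pred_props p5 (let: And3 v _ _ := Ht in v) Hne Ll.
rewrite D /gp /nsons /Delta /=.
case B: (blk N.+1).
  have := S2N t Ht B; case: (head 0 t) => [|[|[|h]]] /=; lia.
case: (head 0 t) => [|[|[|h]]] /=; lia.
exact: p5.
Qed.

Lemma main_inv N : IH N.
Proof.
elim: N => [|N IHN] n Hn; first by [].
have Hs : IH n by move=> k Hk; apply: IHN; lia.
split; [exact: step_R | exact: step_S2 | exact: step_K].
Qed.

End Main.


Lemma have_codes_gen p a L : (forall i, i < size L -> metallic_code p (a + i) (nth [::] L i)) ->
  have_codes p (iota a (size L)) L.
Proof.
move=> H; split; first by rewrite size_iota.
move=> i; rewrite size_iota => Hi; rewrite nth_iota //; exact: H.
Qed.

Lemma wcode p n tw w e : 5 <= p -> rev w = tw -> codeL p n tw -> 1 <= e <= p - 3 ->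
  (e = p - 3 -> ~ scd p tw) -> metallic_code p (e + V p 1 tw) (rcons w e).
Proof.
move=> p5 Ew Hc He Hs; apply/code_rev; rewrite rev_rcons Ew; exact: (codeL_cons p5 He Hc Hs).
Qed.

Lemma ucode p n tu u e : 5 <= p -> rev u = tu -> codeL p n tu -> tu <> [::] -> e <= 1 ->
  metallic_code p (e + V p 1 tu) (rcons u e).
Proof.
move=> p5 Eu [Vt L E] Hne He; apply/code_rev; rewrite rev_rcons Eu; split.
- apply/valid_cons; split => //; lia.
- right; case: tu {Eu Vt E} L Hne => [|b t] //= L _; by case: L.
- by rewrite V_cons m0 muln1.
Qed.

Lemma last_head_rev (u : seq nat) : last 0 u = head 0 (rev u).
Proof. by case/lastP: u => [|s x] //; rewrite rev_rcons last_rcons. Qed.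

Theorem lemma8 (p nu : nat) (u w : seq nat) :
  5 <= p -> 1 <= nu ->
  metallic_code p nu u -> metallic_code p nu.-1 w ->
  let S := sons p leftmost nu in
  (* (i) *)
  (is_black p leftmost nu ->
     (signature u = 1 \/ signature u = 2) /\
     have_codes p S ([seq rcons w h.+1 | h <- iota 1 (p - 4)] ++ [:: rcons u 0]))
  /\ (* (ii) *)
  (~~ is_black p leftmost nu -> signature u = 0 ->
     have_codes p S ([seq rcons w h | h <- iota 1 (p - 4)] ++ [:: rcons u 0; rcons u 1]))
  /\ (* (iii) *)
  (~~ is_black p leftmost nu -> signature u = 1 ->
     have_codes p S ([seq rcons w h.+1 | h <- iota 1 (p - 4)] ++ [:: rcons u 0; rcons u 1]))
  /\ (* (iv) *)
  (~~ is_black p leftmost nu -> 2 <= signature u <= p - 3 ->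
     have_codes p S ([seq rcons w h | h <- iota 1 (p - 3)] ++ [:: rcons u 0])).
Proof.
move=> p5 Hnu Hu Hw S.
have Cu : codeL p nu (rev u) by apply/code_rev.
have Cw : codeL p nu.-1 (rev w) by apply/code_rev.
set tu := rev u in Cu; set tw := rev w in Cw.
have Etw : tw = predL p tu.
  apply: (codeL_uniq p5 Cw); apply: (predL_code p5); by rewrite prednK.
have Hne : tu <> [::] by move=> E; move: Cu; rewrite E => -[_ _ /= E0]; lia.
have Ll : last 0 tu <> 0 by case: Cu => _ [] //.
have [_ _ _ D P3] := pred_props p5 (let: And3 v _ _ := Cu in v) Hne Ll.
have [RN _ _] := main_inv p5 (n := nu.-1) (N := nu.+1) ltac:(lia).
have [_ S2N KN] := main_inv p5 (n := nu) (N := nu.+1) ltac:(lia).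
have Knu := KN Hnu _ Cu; rewrite -Etw in Knu.
have Enx := RN _ Cw; rewrite Knu in Enx.
have HS : S = iota (nx p nu.-1) (nsons p (blk p nu)) by [].
have Esig : signature u = head 0 tu by rewrite /signature last_head_rev.
rewrite -/(blk p nu) Esig {Esig}.
set A := V p 1 tw.
have nS : forall e, 1 <= e <= p - 3 -> (e = p - 3 -> head 0 tu != 0) ->
    metallic_code p (e + A) (rcons w e).
  move=> e He Hz; apply: (wcode p5 (n := nu.-1) erefl Cw He) => Ee.
  change (~ scd p tw); rewrite Etw; apply: P3; exact: Hz.
have uS : forall e, e <= 1 -> metallic_code p (e + (A + Delta p tu)) (rcons u e).
  move=> e He; rewrite -Etw -/A in D; rewrite -D.
  exact: (ucode p5 (n := nu) erefl Cu Hne He).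
rewrite -Etw -/A in D.
have S2u := S2N _ Cu.
rewrite HS Enx => {HS Enx Knu KN RN S2N P3 S}.
rewrite /Delta in uS.
split; [|split; [|split]].
- move=> B; have Hs := S2u B; split => //.
  rewrite B /= /nsons.
  have -> : p - 3 = size ([seq rcons w h.+1 | h <- iota 1 (p - 4)] ++ [:: rcons u 0]).
    by rewrite size_cat size_map size_iota /=; lia.
  apply: have_codes_gen => i; rewrite size_cat size_map size_iota /= => Hi.
  rewrite nth_cat size_map size_iota.
  case: ifP => Hir.
    rewrite (nth_map 0) ?size_iota // nth_iota //.
    have -> : A + 1 + 1 + i = (1 + i).+1 + A by lia.
    apply: nS; first by lia.
    by move=> _; case: Hs => ->.
  have -> : i - (p - 4) = 0 by lia.
  have := uS 0 isT; have -> : head 0 tu == 0 = false by case: Hs => ->.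
  by have -> : A + 1 + 1 + i = 0 + (A + (p - 2)) by lia.
- move=> B Hs0; rewrite (negbTE B) Hs0 /= /nsons.
  have -> : p - 2 = size ([seq rcons w h | h <- iota 1 (p - 4)] ++ [:: rcons u 0; rcons u 1]).
    by rewrite size_cat size_map size_iota /=; lia.
  apply: have_codes_gen => i; rewrite size_cat size_map size_iota /= => Hi.
  rewrite nth_cat size_map size_iota.
  case: ifP => Hir.
    rewrite (nth_map 0) ?size_iota // nth_iota //.
    have -> : A + 1 + 0 + i = (1 + i) + A by lia.
    by apply: nS; lia.
  case E: (i - (p - 4)) => [|[|k]] /=; last by lia.
    by have := uS 0 isT; rewrite Hs0 /=; have -> : A + 1 + 0 + i = 0 + (A + (p - 3)) by lia.
  by have := uS 1 isT; rewrite Hs0 /=; have -> : A + 1 + 0 + i = 1 + (A + (p - 3)) by lia.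
- move=> B Hs1; rewrite (negbTE B) Hs1 /= /nsons.
  have -> : p - 2 = size ([seq rcons w h.+1 | h <- iota 1 (p - 4)] ++ [:: rcons u 0; rcons u 1]).
    by rewrite size_cat size_map size_iota /=; lia.
  apply: have_codes_gen => i; rewrite size_cat size_map size_iota /= => Hi.
  rewrite nth_cat size_map size_iota.
  case: ifP => Hir.
    rewrite (nth_map 0) ?size_iota // nth_iota //.
    have -> : A + 1 + 1 + i = (1 + i).+1 + A by lia.
    apply: nS; first by lia.
    by rewrite Hs1.
  case E: (i - (p - 4)) => [|[|k]] /=; last by lia.
    by have := uS 0 isT; rewrite Hs1 /=; have -> : A + 1 + 1 + i = 0 + (A + (p - 2)) by lia.
  by have := uS 1 isT; rewrite Hs1 /=; have -> : A + 1 + 1 + i = 1 + (A + (p - 2)) by lia.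
- move=> B Hs2; rewrite (negbTE B) /= /nsons.
  have -> : (head 0 tu == 1) = false by apply/negbTE; lia.
  have Hz : (head 0 tu == 0) = false by apply/negbTE; lia.
  have -> : p - 2 = size ([seq rcons w h | h <- iota 1 (p - 3)] ++ [:: rcons u 0]).
    by rewrite size_cat size_map size_iota /=; lia.
  apply: have_codes_gen => i; rewrite size_cat size_map size_iota /= => Hi.
  rewrite nth_cat size_map size_iota.
  case: ifP => Hir.
    rewrite (nth_map 0) ?size_iota // nth_iota //.
    have -> : A + 1 + 0 + i = (1 + i) + A by lia.
    apply: nS; first by lia.
    by rewrite Hz.
  have -> : i - (p - 3) = 0 by lia.
  by have := uS 0 isT; rewrite Hz /=; have -> : A + 1 + 0 + i = 0 + (A + (p - 2)) by lia.
Qed.
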